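(* Let $w\in S_n$ and $1\le p<q\le n$, and let $\mathcal{S}_{w,pq}=K_{pq}.F_w\subset Fl_n(\mathbb{H})$, where $F_w=(\mathbb{H}e_{w(1)},\ldots,\mathbb{H}e_{w(n)})$. The group $G=(\mathbb{H}^* )^n=\{\mathrm{Diag}(\gamma_1,\ldots,\gamma_n):\gamma_\nu\in\mathbb{H}\setminus\{0\}\}$ acts transitively on the complement in $\mathcal{S}_{w,pq}$ of its two $K$-fixed points $F_w$ and $F_{s_{pq}w}$, and there is a point of this complement whose stabilizer in $G$ is $G_{pq}=\{(\gamma_1,\ldots,\gamma_n)\in G:\gamma_p=\gamma_q\}$.
   Context: $\mathbb{H}^n$ is a left $\mathbb{H}$-module with standard basis $e_1,\ldots,e_n$ and inner product $(h,k)=\sum_\nu h_\nu\bar k_\nu$; an invertible matrix $B$ acts $\mathbb{H}$-linearly by $h\mapsto h\cdot B^*$, hence acts on $Fl_n(\mathbb{H})$, the manifold of complete flags $V_1\subset\cdots\subset V_n$ of left $\mathbb{H}$-submodules with $\dim V_\nu=\nu$ (a flag given by mutually orthogonal lines $(L_1,\ldots,L_n)$ corresponds to $V_\nu=L_1\oplus\cdots\oplus L_\nu$). $K=Sp(1)^n$ is the diagonal subgroup of $Sp(n)=\{B:BB^*=I\}$; $K_{pq}\subset Sp(n)$ is the subgroup of matrices whose entries vanish except on the diagonal and at positions $(p,q)$, $(q,p)$. $s_{pq}$ is the transposition of $p,q$. *)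

(* Defs.v *)
From HB Require Import structures.
From mathcomp Require Import all_boot all_order all_algebra all_fingroup.
From mathcomp Require Import reals.
Set Implicit Arguments. Unset Strict Implicit. Unset Printing Implicit Defensive.
Import Order.TTheory GRing.Theory Num.Theory.
Local Open Scope ring_scope.

Section Quat.
Variable R : realType.

Record quat := Quat { qa : R; qb : R; qc : R; qd : R }.

Definition qzero : quat := Quat 0 0 0 0.
Definition qone : quat := Quat 1 0 0 0.
Definition qadd (x y : quat) : quat :=
  Quat (qa x + qa y) (qb x + qb y) (qc x + qc y) (qd x + qd y).
(* Hamilton product: i^2 = j^2 = k^2 = ijk = -1 *)
Definition qmul (x y : quat) : quat :=
  Quat (qa x * qa y - qb x * qb y - qc x * qc y - qd x * qd y)
       (qa x * qb y + qb x * qa y + qc x * qd y - qd x * qc y)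
       (qa x * qc y - qb x * qd y + qc x * qa y + qd x * qb y)
       (qa x * qd y + qb x * qc y - qc x * qb y + qd x * qa y).
Definition qconj (x : quat) : quat := Quat (qa x) (- qb x) (- qc x) (- qd x).
Definition qsum (I : finType) (f : I -> quat) : quat :=
  Quat (\sum_i qa (f i)) (\sum_i qb (f i)) (\sum_i qc (f i)) (\sum_i qd (f i)).

(** H^n (row vectors, a left H-module) *)
Definition hvec (n : nat) := 'I_n -> quat.
Definition hvec0 (n : nat) : hvec n := fun _ => qzero.

Definition lin_comb (n k : nat) (c : 'I_k -> quat) (v : 'I_k -> hvec n) : hvec n :=
  fun x => qsum (fun j => qmul (c j) (v j x)).

Definition has_dim (n : nat) (V : hvec n -> Prop) (k : nat) : Prop :=
  exists v : 'I_k -> hvec n,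
    (forall c : 'I_k -> quat, lin_comb c v = @hvec0 n -> forall j, c j = qzero) /\
    (forall h, V h <-> exists c, h = lin_comb c v).

(** Complete flags: F i is V_{i+1} (0-indexed), dim V_{i+1} = i+1, nested. *)
Definition flag (n : nat) := 'I_n -> (hvec n -> Prop).
Definition is_flag (n : nat) (F : flag n) : Prop :=
  (forall i : 'I_n, has_dim (F i) i.+1) /\
  (forall i j : 'I_n, (i <= j)%N -> forall h, F i h -> F j h).

Definition qmat (n : nat) := 'I_n -> 'I_n -> quat.
Definition qadj (n : nat) (B : qmat n) : qmat n := fun i j => qconj (B j i).
Definition qmatmul (n : nat) (A B : qmat n) : qmat n :=
  fun i j => qsum (fun k => qmul (A i k) (B k j)).
Definition qid (n : nat) : qmat n := fun i j => if i == j then qone else qzero.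

Definition in_Sp (n : nat) (B : qmat n) : Prop := qmatmul B (qadj B) = @qid n.

Definition in_K (n : nat) (B : qmat n) : Prop :=
  in_Sp B /\ forall i j : 'I_n, i != j -> B i j = qzero.

Definition in_Kpq (n : nat) (p q : 'I_n) (B : qmat n) : Prop :=
  in_Sp B /\ forall i j : 'I_n, i != j -> ~ ((i == p) && (j == q) || (i == q) && (j == p)) ->
    B i j = qzero.

(** action h |-> h . B^star, i.e. (h B^star)_j = sum_nu h_nu conj(B_{j nu}) *)
Definition act (n : nat) (B : qmat n) (h : hvec n) : hvec n :=
  fun j => qsum (fun nu => qmul (h nu) (qconj (B j nu))).
Definition act_flag (n : nat) (B : qmat n) (F : flag n) : flag n :=
  fun i h => exists h', F i h' /\ h = act B h'.

Definition Diag (n : nat) (g : 'I_n -> quat) : qmat n :=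
  fun i j => if i == j then g i else qzero.
Definition in_G (n : nat) (g : 'I_n -> quat) : Prop := forall i, g i <> qzero.

(** F_w = (H e_{w(1)}, ..., H e_{w(n)}): V_{i+1} = span(e_{w(0)},...,e_{w(i)}) *)
Definition Fw (n : nat) (w : 'I_n -> 'I_n) : flag n :=
  fun i h => forall x : 'I_n, (forall k : 'I_n, (k <= i)%N -> w k != x) -> h x = qzero.

Definition S_wpq (n : nat) (w : 'I_n -> 'I_n) (p q : 'I_n) : flag n -> Prop :=
  fun F => exists B, in_Kpq p q B /\ F = act_flag B (Fw w).

Definition K_fixed (n : nat) (F : flag n) : Prop :=
  forall B, in_K B -> act_flag B F = F.

End Quat.

(* Main.v *)
Require Import Defs.
From HB Require Import structures.
From mathcomp Require Import all_boot all_order all_algebra all_fingroup.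
From mathcomp Require Import reals.
From mathcomp Require Import ring lra.
Set Implicit Arguments. Unset Strict Implicit. Unset Printing Implicit Defensive.
Import Order.TTheory GRing.Theory Num.Theory.

Section Q.
Local Open Scope ring_scope.
Variable R : realType.
Local Notation quat := (quat R).
Local Notation q0 := (qzero R).
Local Notation q1 := (qone R).

Ltac qs := rewrite /qmul /qadd /qconj /qzero /qone /=; congr Quat; ring.

Lemma qmulA (x y z : quat) : qmul (qmul x y) z = qmul x (qmul y z).
Proof. case: x y z => [? ? ? ?] [? ? ? ?] [? ? ? ?]; qs. Qed.
Lemma qmul1l (x : quat) : qmul q1 x = x.
Proof. case: x => ? ? ? ?; qs. Qed.
Lemma qmul1r (x : quat) : qmul x q1 = x.
Proof. case: x => ? ? ? ?; qs. Qed.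
Lemma qmul0l (x : quat) : qmul q0 x = q0.
Proof. case: x => ? ? ? ?; qs. Qed.
Lemma qmul0r (x : quat) : qmul x q0 = q0.
Proof. case: x => ? ? ? ?; qs. Qed.
Lemma qadd0l (x : quat) : qadd q0 x = x.
Proof. case: x => ? ? ? ?; qs. Qed.
Lemma qadd0r (x : quat) : qadd x q0 = x.
Proof. case: x => ? ? ? ?; qs. Qed.
Lemma qconj0 : qconj q0 = q0.
Proof. qs. Qed.
Lemma qconj1 : qconj q1 = q1.
Proof. qs. Qed.
Lemma qconjK (x : quat) : qconj (qconj x) = x.
Proof. case: x => ? ? ? ?; qs. Qed.

Definition qn (x : quat) : R := qa x ^+ 2 + qb x ^+ 2 + qc x ^+ 2 + qd x ^+ 2.
Definition qinv (x : quat) : quat :=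
  Quat (qa x / qn x) (- qb x / qn x) (- qc x / qn x) (- qd x / qn x).

Lemma qn_nz (x : quat) : x <> q0 -> qn x != 0.
Proof.
case: x => a b c d H; rewrite /qn /=; apply/eqP => E; apply: H.
have ha : a = 0 by nra. have hb : b = 0 by nra.
have hc : c = 0 by nra. have hd : d = 0 by nra.
by rewrite ha hb hc hd.
Qed.

Lemma qmulV (x : quat) : x <> q0 -> qmul x (qinv x) = q1.
Proof.
move=> /qn_nz; case: x => a b c d; rewrite /qinv /qmul /qone /qn /= => N.
congr Quat; field; done.
Qed.
Lemma qmulVl (x : quat) : x <> q0 -> qmul (qinv x) x = q1.
Proof.
move=> /qn_nz; case: x => a b c d; rewrite /qinv /qmul /qone /qn /= => N.
congr Quat; field; done.
Qed.

Lemma qcancl (x a b : quat) : x <> q0 -> qmul x a = qmul x b -> a = b.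
Proof.
move=> Hx E; rewrite -(qmul1l a) -(qmul1l b) -(qmulVl Hx) !qmulA E //.
Qed.
Lemma qcancr (x a b : quat) : x <> q0 -> qmul a x = qmul b x -> a = b.
Proof.
move=> Hx E; rewrite -(qmul1r a) -(qmul1r b) -(qmulV Hx) -!qmulA E //.
Qed.
Lemma qmul_nz (x y : quat) : x <> q0 -> y <> q0 -> qmul x y <> q0.
Proof.
move=> Hx Hy E; apply: Hy; apply: (qcancl Hx); rewrite E qmul0r //.
Qed.
Lemma q1_nz : q1 <> q0.
Proof. case; apply/eqP; exact: oner_neq0. Qed.
Lemma qinv_nz (x : quat) : x <> q0 -> qinv x <> q0.
Proof. move=> Hx E; apply: q1_nz; rewrite -(qmulV Hx) E qmul0r //. Qed.
Lemma qconj_nz (x : quat) : x <> q0 -> qconj x <> q0.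
Proof. move=> Hx E; apply: Hx; rewrite -(qconjK x) E qconj0 //. Qed.
Lemma qmulKV (a b : quat) : b <> q0 -> qmul (qmul a b) (qinv b) = a.
Proof. by move=> Hb; rewrite qmulA qmulV // qmul1r. Qed.
Lemma qmulVK (a b : quat) : b <> q0 -> qmul (qmul a (qinv b)) b = a.
Proof. by move=> Hb; rewrite qmulA qmulVl // qmul1r. Qed.

Lemma id2a (u v al be ga de : quat) :
  qadd (qmul (qadd (qmul u al) (qmul v ga)) (qconj al))
       (qmul (qadd (qmul u be) (qmul v de)) (qconj be)) =
  qadd (qmul u (qadd (qmul al (qconj al)) (qmul be (qconj be))))
       (qmul v (qconj (qadd (qmul al (qconj ga)) (qmul be (qconj de))))).
Proof. case: u v al be ga de => [? ? ? ?] [? ? ? ?] [? ? ? ?] [? ? ? ?] [? ? ? ?] [? ? ? ?]; qs. Qed.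
Lemma id2b (u v al be ga de : quat) :
  qadd (qmul (qadd (qmul u al) (qmul v ga)) (qconj ga))
       (qmul (qadd (qmul u be) (qmul v de)) (qconj de)) =
  qadd (qmul u (qadd (qmul al (qconj ga)) (qmul be (qconj de))))
       (qmul v (qadd (qmul ga (qconj ga)) (qmul de (qconj de)))).
Proof. case: u v al be ga de => [? ? ? ?] [? ? ? ?] [? ? ? ?] [? ? ? ?] [? ? ? ?] [? ? ? ?]; qs. Qed.
Lemma qconjM (x y : quat) : qconj (qmul x y) = qmul (qconj y) (qconj x).
Proof. case: x y => [? ? ? ?] [? ? ? ?]; qs. Qed.

Lemma sum1pt n (F : 'I_n -> R) j : (forall i, i != j -> F i = 0) -> \sum_i F i = F j.
Proof. by move=> H; rewrite (bigD1 j) //= big1 ?addr0 // => i /H. Qed.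
Lemma sum2pt n (F : 'I_n -> R) e f : e != f -> (forall i, i != e -> i != f -> F i = 0) ->
  \sum_i F i = F e + F f.
Proof.
move=> ef H; rewrite (bigD1 e) //= (bigD1 f) 1?eq_sym //= big1 ?addr0 //.
by move=> i /andP [i_f i_e]; apply: H.
Qed.
Lemma qsum1 n (f : 'I_n -> quat) j : (forall i, i != j -> f i = q0) -> qsum f = f j.
Proof.
move=> H; rewrite /qsum; case E: (f j) => [a b c d].
by congr Quat; rewrite (sum1pt (j:=j)) ?E // => i /H ->.
Qed.
Lemma qsum2 n (f : 'I_n -> quat) e g : e != g -> (forall i, i != e -> i != g -> f i = q0) ->
  qsum f = qadd (f e) (f g).
Proof.
move=> eg H; rewrite /qsum /qadd; congr Quat; rewrite (sum2pt eg) // => i ie ig; by rewrite H.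
Qed.
End Q.

Require Import Stdlib.Logic.FunctionalExtensionality Stdlib.Logic.PropExtensionality Stdlib.Logic.Classical_Prop.

Lemma flag_ext (R : realType) n (F G : flag R n) : (forall i h, F i h <-> G i h) -> F = G.
Proof.
move=> H; apply: functional_extensionality => i; apply: functional_extensionality => h.
by apply: propositional_extensionality.
Qed.

Lemma notin_iff n (w : 'S_n) (i x : 'I_n) :
  (forall k : 'I_n, (k <= i)%N -> w k != x) <-> (i < (w^-1)%g x)%N.
Proof.
split.
- move=> H; rewrite ltnNge; apply/negP => le; move: (H _ le); by rewrite permKV eqxx.
- move=> lt k ki; apply/eqP => E; move: lt; by rewrite -E permK ltnNge ki.
Qed.

Section Diag.
Local Open Scope ring_scope.
Variable R : realType.
Variable n : nat.
Local Notation quat := (quat R).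
Local Notation q0 := (qzero R).
Local Notation q1 := (qone R).

Lemma act_diag (g : 'I_n -> quat) h j : Defs.act (Diag g) h j = qmul (h j) (qconj (g j)).
Proof.
rewrite /Defs.act (qsum1 (j:=j)) /Diag ?eqxx // => nu nj.
by rewrite eq_sym (negbTE nj) qconj0 qmul0r.
Qed.

Lemma Diag_entry (g : 'I_n -> quat) i j :
  qmatmul (Diag g) (qadj (Diag g)) i j = qmul (g i) (qconj (if j == i then g j else q0)).
Proof.
rewrite /qmatmul /qadj (qsum1 (j:=i)) /Diag ?eqxx // => k ki.
by rewrite eq_sym (negbTE ki) qmul0l.
Qed.

Lemma Diag_Sp (g : 'I_n -> quat) : (forall j, qmul (g j) (qconj (g j)) = q1) -> in_Sp (Diag g).
Proof.
move=> H; rewrite /in_Sp; apply: functional_extensionality => i; apply: functional_extensionality => j.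
rewrite Diag_entry /qid; case: (eqVneq i j) => [->|ij]; first by rewrite ?eqxx H.
by rewrite ?qconj0 ?qmul0r.
Qed.

Lemma Sp_Diag_nz (g : 'I_n -> quat) j : in_Sp (Diag g) -> g j <> q0.
Proof.
move=> H E; have := congr1 (fun M => M j j) H; rewrite Diag_entry /qid eqxx E qmul0l.
by move=> /esym; apply: q1_nz.
Qed.

Lemma inK_Diag (B : qmat R n) : in_K B -> B = Diag (fun j => B j j).
Proof.
case=> _ HB; apply: functional_extensionality => i; apply: functional_extensionality => j.
rewrite /Diag; case: (eqVneq i j) => [->|ij] //; exact: HB.
Qed.

Lemma Diag_inK (g : 'I_n -> quat) : (forall j, qmul (g j) (qconj (g j)) = q1) -> in_K (Diag g).
Proof.
move=> H; split; first exact: Diag_Sp.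
by move=> i j ij; rewrite /Diag (negbTE ij).
Qed.
End Diag.

Lemma half_nz (R : realType) : (1/2 : R)%R <> 0%R.
Proof. lra. Qed.

Section Main.
Local Open Scope ring_scope.
Variable R : realType.
Variable n : nat.
Variable w : 'S_n.
Variables p q : 'I_n.
Hypothesis hne : p != q.
Hypothesis hab : ((w^-1)%g p < (w^-1)%g q)%N.
Local Notation quat := (quat R).
Local Notation q0 := (qzero R).
Local Notation q1 := (qone R).
Local Notation r j := (nat_of_ord ((w^-1)%g j)).

Lemma hqp : q != p. Proof. by rewrite eq_sym. Qed.
Lemma tpD j : j != p -> j != q -> tperm p q j = j.
Proof. by move=> jp jq; rewrite tpermD // eq_sym. Qed.

Definition FL (x y : quat) : flag R n := fun i h =>
  if (r p <= i < r q)%N then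
    (forall j, j != p -> j != q -> (i < r j)%N -> h j = q0) /\
    exists t, h p = qmul t x /\ h q = qmul t y
  else forall j, (i < r j)%N -> h j = q0.

Lemma out_range (i : 'I_n) : (r p <= i < r q)%N = false -> (i < r q)%N -> (i < r p)%N.
Proof. by move=> nr iq; rewrite ltnNge; apply/negP => pi; rewrite pi iq in nr. Qed.

Lemma Fa_FL : Fw (fun k => w k) = FL q1 q0.
Proof.
apply: flag_ext => i h; rewrite /Fw /FL.
have E : (forall x, (forall k : 'I_n, (k <= i)%N -> w k != x) -> h x = q0) <->
         (forall j, (i < r j)%N -> h j = q0).
  by split => H x Hx; apply: H; apply/notin_iff.
rewrite E; case: ifP => [/andP [pi iq] | nr] //.
split.
- move=> H; split; first by move=> j _ _; apply: H.
  by exists (h p); rewrite qmul1r qmul0r; split => //; apply: H.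
- case=> Hz [t [Hp Hq]] x lt.
  case: (eqVneq x p) => [xp|xp]; first by rewrite xp ltnNge pi in lt.
  case: (eqVneq x q) => [->|xq]; first by rewrite Hq qmul0r.
  exact: Hz.
Qed.

Lemma Fb_FL : Fw (fun k => tperm p q (w k)) = FL q0 q1.
Proof.
apply: flag_ext => i h; rewrite /Fw /FL.
have E : (forall x, (forall k : 'I_n, (k <= i)%N -> tperm p q (w k) != x) -> h x = q0) <->
         (forall j, (i < r (tperm p q j))%N -> h j = q0).
  have E1 x : (forall k : 'I_n, (k <= i)%N -> tperm p q (w k) != x) <->
              (forall k : 'I_n, (k <= i)%N -> w k != tperm p q x).
    by split => H k ki; move: (H k ki); rewrite (can2_eq (tpermK p q) (tpermK p q)).
  split; move=> H x Hx; apply: H; [apply/E1; exact/notin_iff | apply/(notin_iff w); exact/E1].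
rewrite E; case: ifP => [/andP [pi iq] | nr].
- split.
  + move=> H; split; first by move=> j jp jq lt; apply: H; rewrite tpD.
    exists (h q); rewrite qmul1r qmul0r; split => //; apply: H; by rewrite tpermL.
  + case=> Hz [t [Hp Hq]] x lt.
    case: (eqVneq x p) => [->|xp]; first by rewrite Hp qmul0r.
    case: (eqVneq x q) => [xq|xq]; first by rewrite xq tpermR ltnNge pi in lt.
    by apply: Hz => //; rewrite tpD in lt.
- have Hr x : (i < r (tperm p q x))%N = (i < r x)%N.
    case: (eqVneq x p) => [->|xp]; rewrite ?tpermL.
      apply/idP/idP => [|/ltn_trans]; [exact: out_range | exact].
    case: (eqVneq x q) => [->|xq]; rewrite ?tpermR.
      apply/idP/idP => [/ltn_trans|]; [exact | exact: out_range].
    by rewrite tpD.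
  by split => H j; [rewrite -Hr | rewrite Hr]; apply: H.
Qed.

Section KB.
Variable B : qmat R n.
Hypothesis HB : in_Kpq p q B.

Lemma Bz i j : i != j -> ~ ((i == p) && (j == q) || (i == q) && (j == p)) -> B i j = q0.
Proof. exact: HB.2. Qed.

Lemma Bo j k : j != p -> j != q -> k != j -> B j k = q0.
Proof. by move=> jp jq kj; apply: Bz; [rewrite eq_sym | rewrite (negbTE jp) (negbTE jq)]. Qed.

Lemma Brow i k : (i == p) || (i == q) -> k != p -> k != q -> B i k = q0.
Proof.
move=> /orP [] /eqP -> kp kq; (apply: Bz; first by rewrite eq_sym).
  by rewrite eqxx (negbTE kq) (negbTE hne).
by rewrite eqxx (negbTE kp) (negbTE hqp).
Qed.

Lemma act_o h j : j != p -> j != q -> Defs.act B h j = qmul (h j) (qconj (B j j)).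
Proof.
move=> jp jq; rewrite /Defs.act (qsum1 (j:=j)) // => nu nj.
by rewrite Bo // qconj0 qmul0r.
Qed.

Lemma act_p h : Defs.act B h p = qadd (qmul (h p) (qconj (B p p))) (qmul (h q) (qconj (B p q))).
Proof.
rewrite /Defs.act (qsum2 hne) // => nu np nq.
by rewrite Brow ?eqxx // qconj0 qmul0r.
Qed.

Lemma act_q h : Defs.act B h q = qadd (qmul (h p) (qconj (B q p))) (qmul (h q) (qconj (B q q))).
Proof.
rewrite /Defs.act (qsum2 hne) // => nu np nq.
by rewrite Brow ?eqxx ?orbT // qconj0 qmul0r.
Qed.

Lemma Sp_entry i j : qsum (fun k => qmul (B i k) (qconj (B j k))) = qid R i j.
Proof. by have := congr1 (fun M => M i j) HB.1. Qed.

Lemma Sp_o j : j != p -> j != q -> qmul (B j j) (qconj (B j j)) = q1.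
Proof.
move=> jp jq; have := Sp_entry j j; rewrite /qid eqxx (qsum1 (j:=j)) // => k kj.
by rewrite Bo // qmul0l.
Qed.

Lemma Sp_ij i j : (i == p) || (i == q) ->
  qadd (qmul (B i p) (qconj (B j p))) (qmul (B i q) (qconj (B j q))) = qid R i j.
Proof.
move=> Hi; rewrite -Sp_entry (qsum2 hne) // => k kp kq.
by rewrite Brow // qmul0l.
Qed.

Lemma Sp_pp : qadd (qmul (B p p) (qconj (B p p))) (qmul (B p q) (qconj (B p q))) = q1.
Proof. by rewrite Sp_ij ?eqxx // /qid eqxx. Qed.
Lemma Sp_pq : qadd (qmul (B p p) (qconj (B q p))) (qmul (B p q) (qconj (B q q))) = q0.
Proof. by rewrite Sp_ij ?eqxx // /qid (negbTE hne). Qed.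
Lemma Sp_qq : qadd (qmul (B q p) (qconj (B q p))) (qmul (B q q) (qconj (B q q))) = q1.
Proof. by rewrite Sp_ij ?eqxx ?orbT // /qid eqxx. Qed.

Lemma col_nz : B p p <> q0 \/ B q p <> q0.
Proof.
case: (classic (B p p = q0)) => [E1|]; last by left.
case: (classic (B q p = q0)) => [E2|]; last by right.
exfalso.
have H1 := Sp_pq; rewrite E1 qmul0l qadd0l in H1.
have H2 := Sp_pp; rewrite E1 qmul0l qadd0l in H2.
have H3 := Sp_qq; rewrite E2 qmul0l qadd0l in H3.
have Bpq_nz : B p q <> q0 by move=> E; rewrite E qmul0l in H2; exact: q1_nz (esym H2).
have : qconj (B q q) = q0 by apply: (qcancl Bpq_nz); rewrite H1 qmul0r.
by move=> E; rewrite E qmul0r in H3; exact: q1_nz (esym H3).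
Qed.

Lemma actK : act_flag B (FL q1 q0) = FL (qconj (B p p)) (qconj (B q p)).
Proof.
apply: flag_ext => i h; rewrite /act_flag /FL; case: ifP => [/andP [pi iq] | nr].
- split.
  + case=> h' [[Hz [t [Hp Hq]]] ->]; rewrite qmul1r in Hp; rewrite qmul0r in Hq.
    split; first by move=> j jp jq lt; rewrite act_o // Hz // qmul0l.
    by exists t; rewrite act_p act_q Hp Hq !qmul0l !qadd0r.
  + case=> Hz [t [Hp Hq]].
    exists (fun j => if j == p then t else if j == q then q0 else qmul (h j) (B j j)).
    split.
      split; first by move=> j jp jq lt; rewrite (negbTE jp) (negbTE jq) Hz // qmul0l.
      by exists t; rewrite eqxx (negbTE hqp) eqxx qmul1r qmul0r.
    apply: functional_extensionality => j.
    case: (eqVneq j p) => [->|jp].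
      by rewrite act_p eqxx (negbTE hqp) eqxx qmul0l qadd0r Hp.
    case: (eqVneq j q) => [->|jq].
      by rewrite act_q eqxx (negbTE hqp) eqxx qmul0l qadd0r Hq.
    by rewrite act_o // (negbTE jp) (negbTE jq) qmulA Sp_o // qmul1r.
- have orr := out_range nr.
  split.
  + case=> h' [Hz ->] j lt.
    case: (eqVneq j p) => [E|jp].
      rewrite E in lt *; rewrite act_p Hz // Hz ?(ltn_trans lt) // !qmul0l qadd0l //.
    case: (eqVneq j q) => [E|jq].
      rewrite E in lt *; rewrite act_q Hz ?orr // Hz // !qmul0l qadd0l //.
    by rewrite act_o // Hz // qmul0l.
  + move=> Hz.
    exists (fun j => if j == p then qadd (qmul (h p) (B p p)) (qmul (h q) (B q p))
             else if j == q then qadd (qmul (h p) (B p q)) (qmul (h q) (B q q))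
             else qmul (h j) (B j j)).
    split.
      move=> j lt.
      case: (eqVneq j p) => [E|jp].
        by rewrite E in lt *; rewrite Hz // Hz ?(ltn_trans lt) // !qmul0l qadd0l.
      case: (eqVneq j q) => [E|jq].
        by rewrite E in lt *; rewrite ?(negbTE hqp) Hz ?orr // Hz // !qmul0l qadd0l.
      by rewrite Hz // qmul0l.
    apply: functional_extensionality => j.
    case: (eqVneq j p) => [->|jp].
      by rewrite act_p eqxx (negbTE hqp) eqxx id2a Sp_pp Sp_pq qconj0 qmul0r qadd0r qmul1r.
    case: (eqVneq j q) => [->|jq].
      by rewrite act_q eqxx (negbTE hqp) eqxx id2b Sp_pq Sp_qq qmul0r qadd0l qmul1r.
    by rewrite act_o // (negbTE jp) (negbTE jq) qmulA Sp_o // qmul1r.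
Qed.
End KB.

Lemma FL_scale t x y : t <> q0 -> FL (qmul t x) (qmul t y) = FL x y.
Proof.
move=> Ht; apply: flag_ext => i h; rewrite /FL; case: ifP => _ //.
split; case=> Hz [s [Hp Hq]]; split => //.
  by exists (qmul s t); rewrite !qmulA.
exists (qmul s (qinv t)).
by rewrite !qmulA -!(qmulA (qinv t)) qmulVl // !qmul1l.
Qed.

Lemma FL_inj x y x' y' : FL x y = FL x' y' -> exists t, x' = qmul t x /\ y' = qmul t y.
Proof.
move=> E.
pose h0 := fun j => if j == p then x' else if j == q then y' else q0.
have : FL x' y' ((w^-1)%g p) h0.
  rewrite /FL leqnn hab /=; split.
    by move=> j jp jq _; rewrite /h0 (negbTE jp) (negbTE jq).
  by exists q1; rewrite /h0 eqxx (negbTE hqp) eqxx !qmul1l.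
rewrite -E /FL leqnn hab /= => -[_ [t [Hp Hq]]]; exists t.
by move: Hp Hq; rewrite /h0 eqxx (negbTE hqp) eqxx.
Qed.

Lemma FL_diag (g : 'I_n -> quat) x y : (forall j, g j <> q0) ->
  act_flag (Diag g) (FL x y) = FL (qmul x (qconj (g p))) (qmul y (qconj (g q))).
Proof.
move=> Hg; have Hc j : qconj (g j) <> q0 by apply: qconj_nz.
apply: flag_ext => i h; rewrite /act_flag /FL; case: ifP => _.
- split.
  + case=> h' [[Hz [t [Hp Hq]]] ->]; split.
      by move=> j jp jq lt; rewrite act_diag Hz // qmul0l.
    by exists t; rewrite !act_diag Hp Hq !qmulA.
  + case=> Hz [t [Hp Hq]]; exists (fun j => qmul (h j) (qinv (qconj (g j)))); split.
      split; first by move=> j jp jq lt; rewrite Hz // qmul0l.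
      by exists t; rewrite Hp Hq -!qmulA !qmulKV.
    by apply: functional_extensionality => j; rewrite act_diag qmulVK.
- split.
  + by case=> h' [Hz ->] j lt; rewrite act_diag Hz // qmul0l.
  + move=> Hz; exists (fun j => qmul (h j) (qinv (qconj (g j)))); split.
      by move=> j lt; rewrite Hz // qmul0l.
    by apply: functional_extensionality => j; rewrite act_diag qmulVK.
Qed.

Lemma FLa_iff x y : x <> q0 \/ y <> q0 -> (FL x y = FL q1 q0 <-> y = q0).
Proof.
move=> Hxy; split.
- move=> /FL_inj [t [E1 E2]].
  have Ht : t <> q0 by move=> Et; rewrite Et qmul0l in E1; exact: q1_nz E1.
  by apply: (qcancl Ht); rewrite -E2 qmul0r.
- move=> Ey; rewrite Ey in Hxy *; case: Hxy => // Hx.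
  by rewrite -(FL_scale q1 q0 Hx) qmul1r qmul0r.
Qed.

Lemma FLb_iff x y : x <> q0 \/ y <> q0 -> (FL x y = FL q0 q1 <-> x = q0).
Proof.
move=> Hxy; split.
- move=> /FL_inj [t [E1 E2]].
  have Ht : t <> q0 by move=> Et; rewrite Et qmul0l in E2; exact: q1_nz E2.
  by apply: (qcancl Ht); rewrite -E1 qmul0r.
- move=> Ex; rewrite Ex in Hxy *; case: Hxy => // Hy.
  by rewrite -(FL_scale q0 q1 Hy) qmul1r qmul0r.
Qed.

Lemma Kfix_a : K_fixed (FL q1 q0).
Proof.
move=> B HK; rewrite (inK_Diag HK).
have Hd j : B j j <> q0.
  by apply: (Sp_Diag_nz (g := fun j => B j j)); rewrite -(inK_Diag HK); exact: HK.1.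
rewrite FL_diag // qmul1l qmul0l -(FL_scale q1 q0 (qconj_nz (Hd p))) qmul1r qmul0r //.
Qed.

Lemma Kfix_b : K_fixed (FL q0 q1).
Proof.
move=> B HK; rewrite (inK_Diag HK).
have Hd j : B j j <> q0.
  by apply: (Sp_Diag_nz (g := fun j => B j j)); rewrite -(inK_Diag HK); exact: HK.1.
rewrite FL_diag // qmul1l qmul0l -(FL_scale q0 q1 (qconj_nz (Hd q))) qmul1r qmul0r //.
Qed.

Lemma main_gen :
  (forall F, S_wpq (R := R) (fun k => w k) p q F ->
     (K_fixed F <-> F = Fw (fun k => w k) \/ F = Fw (fun k => tperm p q (w k)))) /\
  (forall F1 F2, S_wpq (R := R) (fun k => w k) p q F1 -> S_wpq (R := R) (fun k => w k) p q F2 ->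
     F1 <> Fw (fun k => w k) -> F1 <> Fw (fun k => tperm p q (w k)) ->
     F2 <> Fw (fun k => w k) -> F2 <> Fw (fun k => tperm p q (w k)) ->
     exists g, in_G g /\ act_flag (Diag g) F1 = F2) /\
  (exists F0, S_wpq (R := R) (fun k => w k) p q F0 /\ F0 <> Fw (fun k => w k) /\
     F0 <> Fw (fun k => tperm p q (w k)) /\
     forall g, in_G g -> (act_flag (Diag g) F0 = F0 <-> g p = g q)).
Proof.
have SF : forall F, S_wpq (R := R) (fun k => w k) p q F ->
    exists x y, F = FL x y /\ (x <> q0 \/ y <> q0).
  move=> F [B [HB ->]]; rewrite Fa_FL (actK HB).
  exists (qconj (B p p)), (qconj (B q p)); split => //.
  by case: (col_nz HB) => H; [left|right]; apply: qconj_nz.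
rewrite Fa_FL Fb_FL.
split.
  move=> F /SF [x [y [-> Hxy]]]; rewrite (FLa_iff Hxy) (FLb_iff Hxy); split.
  - move=> HK.
    pose g0 := fun j => if j == q then Quat (-1) 0 0 0 else q1.
    have Hg0 : forall j, qmul (g0 j) (qconj (g0 j)) = q1.
      by move=> j; rewrite /g0; case: (j == q); rewrite /qmul /qconj /qone /=; congr Quat; ring.
    have Hg0n : forall j, g0 j <> q0.
      by move=> j; apply: (Sp_Diag_nz (g := g0)); exact: Diag_Sp Hg0.
    have := HK _ (Diag_inK Hg0); rewrite FL_diag //.
    rewrite /g0 (negbTE hne) eqxx qconj1 qmul1r => /FL_inj [t [E1 E2]].
    case: (classic (x = q0)) => Hx; [by right | left].
    have Ht : t = q1 by apply: (qcancr Hx); rewrite qmul1l -E1.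
    rewrite Ht qmul1l in E2; move: E2; clear.
    destruct y as [a b c d]; rewrite /qmul /qconj /qzero /=; case=> ha hb hc hd.
    congr Quat; lra.
  - case=> E.
      by rewrite (proj2 (FLa_iff Hxy) E); exact: Kfix_a.
    by rewrite (proj2 (FLb_iff Hxy) E); exact: Kfix_b.
split.
  move=> F1 F2 /SF [x1 [y1 [-> H1]]] /SF [x2 [y2 [-> H2]]].
  rewrite (FLa_iff H1) (FLb_iff H1) (FLa_iff H2) (FLb_iff H2) => y1n x1n y2n x2n.
  pose g := fun j => if j == p then qconj (qmul (qinv x1) x2)
                     else if j == q then qconj (qmul (qinv y1) y2) else q1.
  have Hg : forall j, g j <> q0.
    move=> j; rewrite /g; case: (j == p); [|case: (j == q)];
      by [apply: qconj_nz; apply: qmul_nz => //; apply: qinv_nz | exact: q1_nz].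
  exists g; split => //.
  by rewrite FL_diag // /g eqxx (negbTE hqp) eqxx !qconjK -!qmulA !qmulV // !qmul1l.
pose c : quat := Quat (1/2) (1/2) 0 0.
pose mc : quat := Quat (-(1/2)) (-(1/2)) 0 0.
pose B1 : qmat R n := fun i j =>
  if i == p then (if j == p then c else if j == q then c else q0)
  else if i == q then (if j == p then c else if j == q then mc else q0)
  else (if i == j then q1 else q0).
have Bpp : B1 p p = c by rewrite /B1 eqxx.
have Bpq : B1 p q = c by rewrite /B1 eqxx (negbTE hqp) eqxx.
have Bqp : B1 q p = c by rewrite /B1 (negbTE hqp) !eqxx.
have Bqq : B1 q q = mc by rewrite /B1 (negbTE hqp) !eqxx.
have Bjp j : j != p -> j != q -> B1 j p = q0.
  by move=> jp jq; rewrite /B1 (negbTE jp) (negbTE jq).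
have Bjq j : j != p -> j != q -> B1 j q = q0.
  by move=> jp jq; rewrite /B1 (negbTE jp) (negbTE jq).
have Bpk k : k != p -> k != q -> B1 p k = q0.
  by move=> kp kq; rewrite /B1 eqxx (negbTE kp) (negbTE kq).
have Bqk k : k != p -> k != q -> B1 q k = q0.
  by move=> kp kq; rewrite /B1 (negbTE hqp) eqxx (negbTE kp) (negbTE kq).
have Bij i j : i != p -> i != q -> B1 i j = if i == j then q1 else q0.
  by move=> ip iq; rewrite /B1 (negbTE ip) (negbTE iq).
have HB1 : in_Kpq p q B1.
  split.
    apply: functional_extensionality => i; apply: functional_extensionality => j.
    rewrite /qmatmul /qadj /qid.
    case: (eqVneq i p) => [->|ip]; [|case: (eqVneq i q) => [->|iq]].
    - rewrite (qsum2 hne); last by move=> k kp kq; rewrite Bpk // qmul0l.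
      rewrite Bpp Bpq.
      case: (eqVneq j p) => [->|jp]; [|case: (eqVneq j q) => [->|jq]].
      + by rewrite Bpp Bpq /qmul /qadd /qconj /qone /=; congr Quat; field.
      + by rewrite Bqp Bqq ?(negbTE hne) ?(negbTE hqp) /qmul /qadd /qconj /qzero /=; congr Quat; field.
      + by rewrite Bjp // Bjq // qconj0 !qmul0r qadd0r ?(negbTE hne).
    - rewrite (qsum2 hne); last by move=> k kp kq; rewrite Bqk // qmul0l.
      rewrite Bqp Bqq.
      case: (eqVneq j p) => [->|jp]; [|case: (eqVneq j q) => [->|jq]].
      + by rewrite Bpp Bpq ?(negbTE hqp) /qmul /qadd /qconj /qzero /=; congr Quat; field.
      + by rewrite Bqp Bqq /qmul /qadd /qconj /qone /=; congr Quat; field.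
      + by rewrite Bjp // Bjq // qconj0 !qmul0r qadd0r ?(negbTE hne).
    - rewrite (qsum1 (j := i)); last by move=> k ki; rewrite Bij // eq_sym (negbTE ki) qmul0l.
      rewrite Bij // eqxx qmul1l.
      case: (eqVneq j i) => [->|ji]; first by rewrite Bij // eqxx qconj1.
      case: (eqVneq j p) => [->|jp]; first by rewrite Bpk // qconj0 ?(negbTE ip).
      case: (eqVneq j q) => [->|jq]; first by rewrite Bqk // qconj0 ?(negbTE iq).
      by rewrite Bij // ?(negbTE ji) qconj0.
  move=> i j ij H.
  case: (eqVneq i p) => [Ei|ip]; [|case: (eqVneq i q) => [Ei|iq]].
  - rewrite Ei in ij H *.
    have jq : j != q by apply/negP => /eqP E; apply: H; rewrite E !eqxx.
    by rewrite Bpk // eq_sym.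
  - rewrite Ei in ij H *.
    have jp : j != p by apply/negP => /eqP E; apply: H; rewrite E !eqxx orbT.
    by rewrite Bqk // eq_sym.
  - by rewrite Bij // (negbTE ij).
have cn : qconj c <> q0.
  move=> E; have H : qa (qconj c) = qa q0 by rewrite E.
  by rewrite /c /qconj /qzero /= in H; apply: (half_nz H).
have Hcc : qconj c <> q0 \/ qconj c <> q0 by left.
exists (act_flag B1 (FL q1 q0)); split; first by exists B1; rewrite Fa_FL.
rewrite (actK HB1) Bpp Bqp.
split; first by rewrite (FLa_iff Hcc).
split; first by rewrite (FLb_iff Hcc).
move=> g Hg; rewrite FL_diag //; split.
- move=> /FL_inj [t [E1 E2]].
  have Ht : t <> q0 by move=> Et; rewrite Et qmul0l in E1; exact: cn E1.
  have : qconj (g p) = qconj (g q) by apply: (qcancl cn); apply: (qcancl Ht); rewrite -E1 -E2.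
  by move=> /(congr1 (@qconj R)); rewrite !qconjK.
- move=> ->; set z := qconj (g q).
  have E : qmul (qmul (qmul (qconj c) z) (qinv (qconj c))) (qconj c) = qmul (qconj c) z.
    by rewrite qmulVK.
  rewrite -E FL_scale //.
  apply: qmul_nz; last exact: qinv_nz.
  by apply: qmul_nz => //; apply: qconj_nz.
Qed.
End Main.

Unset Implicit Arguments.

Lemma in_Kpq_sym (R : realType) n (p q : 'I_n) (B : qmat R n) : in_Kpq q p B <-> in_Kpq p q B.
Proof.
split; case=> H1 H2; split => // i j ij H; apply: H2 => //; by rewrite orbC.
Qed.

Lemma S_sym (R : realType) n (w : 'I_n -> 'I_n) (p q : 'I_n) : S_wpq (R := R) w q p = S_wpq w p q.
Proof.
apply: functional_extensionality => F; apply: propositional_extensionality.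
by split; case=> B [HB E]; exists B; split => //; apply/in_Kpq_sym.
Qed.

Theorem lemma3p3 (R : realType) (n : nat) (w : 'S_n) (p q : 'I_n) (hpq : (p < q)%N) :
  let S := S_wpq (R := R) (fun k => w k) p q in
  let Fa := Fw (R := R) (fun k => w k) in
  let Fb := Fw (R := R) (fun k => tperm p q (w k)) in
  (* F_w and F_{s_pq w} are exactly the K-fixed points of S_{w,pq} *)
  (forall F, S F -> (K_fixed F <-> F = Fa \/ F = Fb)) /\
  (* G acts transitively on S_{w,pq} \ {F_w, F_{s_pq w}} *)
  (forall F1 F2, S F1 -> S F2 -> F1 <> Fa -> F1 <> Fb -> F2 <> Fa -> F2 <> Fb ->
     exists g, in_G g /\ act_flag (Diag g) F1 = F2) /\
  (* some point of the complement has stabilizer G_pq in G *)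
  (exists F0, S F0 /\ F0 <> Fa /\ F0 <> Fb /\
     forall g, in_G g -> (act_flag (Diag g) F0 = F0 <-> g p = g q)).
Proof.
cbv zeta.
have pq : p != q by apply/eqP => E; rewrite E ltnn in hpq.
case: (ltngtP ((w^-1)%g p) ((w^-1)%g q)) => [lt|gt|eq].
- exact: (@main_gen R n w p q pq lt).
- have qp : q != p by rewrite eq_sym.
  have := @main_gen R n w q p qp gt; rewrite S_sym (tpermC q p).
  case=> H1 [H2 [F0 [S0 [Na [Nb H3]]]]].
  split; first by move=> F SF; rewrite H1 // or_comm.
  split; first exact: H2.
  exists F0; do 3 (split => //).
  by move=> g Hg; rewrite H3 //; split => ->.
- by move: pq; rewrite (perm_inj (val_inj eq)) eqxx.
Qed.
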